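(* Let $\Pi_n$ be a PARITY$_n$ program such that no rule $y\leftarrow B$ of $\Pi_n$ has $y\in var(B)$ and every rule body of $\Pi_n$ is consistent. Suppose $\Pi_n$ contains a rule $x\leftarrow B$ (with $x$ a variable) such that $not\ not\ x\in B$ and $S(B)=\{J\}$ for a single string $J$ which is odd. Let $\Pi_n'$ be obtained from $\Pi_n$ by replacing this rule with $x\leftarrow B\setminus\{not\ not\ x\}$. Then $Ans(\Pi_n')=$ PARITY$_n$.
   Context: A rule element is one of $\top$, $\bot$, $x$, $not\ x$, $not\ not\ x$, where $x$ is a variable. A (canonical) rule is $H\leftarrow B$ with $H$ a variable or $\bot$ and $B$ a finite set of rule elements; a canonical program is a finite set of rules. For a body $B$, $var(B)=\{e\in B: e\text{ is a variable}\}$. For a set of variables $I$: $I\models\top$; $I\not\models\bot$; $I\models x$ iff $I\models not\ not\ x$ iff $x\in I$; $I\models not\ x$ iff $x\notin I$; $I\models B$ iff $I$ satisfies every element of $B$; $I$ is closed under $H\leftarrow B$ if $I\models B$ implies $I\models H$. The reduct $\Pi^I$ replaces $not\ not\ x$ by $\top$ if $x\in I$ else $\bot$, and $not\ x$ by $\top$ if $x\notin I$ else $\bot$; $I$ is an answer set of $\Pi$ if $I$ is the least set closed under all rules of $\Pi^I$; $Ans(\Pi)$ is the set of answer sets; $var(\Pi)$ is the set of variables occurring in $\Pi$. Strings $w\in\{0,1\}^n$ are identified with $\{x_i:w_i=1\}$; PARITY$_n$ is the set of strings in $\{0,1\}^n$ with an odd number of 1's (odd strings; the others are even); a PARITY$_n$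 program is a canonical program $\Pi$ with $var(\Pi)=\{x_1,\dots,x_n\}$ and $Ans(\Pi)=$ PARITY$_n$. For a set $B$ of rule elements, $S(B)=\{I\subseteq\{x_1,\dots,x_n\}: I\models B\}$; $B$ is consistent if $S(B)\neq\emptyset$. *)

(* Defs.v *)
From HB Require Import structures.
From mathcomp Require Import all_boot.
Set Implicit Arguments. Unset Strict Implicit. Unset Printing Implicit Defensive.

(* Variables x_1..x_n are represented by 'I_n (x_{i+1} <-> i). *)
Inductive elem (n : nat) : Type :=
| ETop | EBot | EPos of 'I_n | ENeg of 'I_n | ENNeg of 'I_n.
Arguments ETop {n}. Arguments EBot {n}.

Definition elem_code n (e : elem n) : nat * option 'I_n :=
  match e with
  | ETop => (0, None) | EBot => (1, None) | EPos x => (2, Some x)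
  | ENeg x => (3, Some x) | ENNeg x => (4, Some x) end.
Definition elem_decode n (p : nat * option 'I_n) : option (elem n) :=
  match p with
  | (0, None) => Some ETop | (1, None) => Some EBot
  | (2, Some x) => Some (EPos x) | (3, Some x) => Some (ENeg x)
  | (4, Some x) => Some (ENNeg x) | _ => None end.
Lemma elem_codeK n : pcancel (@elem_code n) (@elem_decode n).
Proof. by case. Qed.
HB.instance Definition _ n := Equality.copy (elem n) (pcan_type (@elem_codeK n)).

(* A rule H <- B: head None stands for bottom; the body is a finite set of
   rule elements, represented by a list (set semantics). *)
Definition rule n := (option 'I_n * seq (elem n))%type.
Definition program n := seq (rule n).

Definition sat_elem n (I : {set 'I_n}) (e : elem n) : bool :=
  match e with
  | ETop => true | EBot => false
  | EPos x => x \in I | ENeg x => x \notin I | ENNeg x => x \in I end.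
Definition sat_body n (I : {set 'I_n}) (B : seq (elem n)) : bool :=
  all (sat_elem I) B.
Definition sat_head n (I : {set 'I_n}) (h : option 'I_n) : bool :=
  if h is Some x then x \in I else false.
Definition closed_rule n (I : {set 'I_n}) (r : rule n) : bool :=
  sat_body I r.2 ==> sat_head I r.1.
Definition closed_prog n (I : {set 'I_n}) (P : program n) : bool :=
  all (closed_rule I) P.

Definition reduct_elem n (I : {set 'I_n}) (e : elem n) : elem n :=
  match e with
  | ENNeg x => if x \in I then ETop else EBot
  | ENeg x => if x \notin I then ETop else EBot
  | _ => e end.
Definition reduct n (P : program n) (I : {set 'I_n}) : program n :=
  [seq (r.1, map (reduct_elem I) r.2) | r <- P].

Definition answer_set n (P : program n) (I : {set 'I_n}) : Prop :=
  closed_prog I (reduct P I) /\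
  forall J : {set 'I_n}, closed_prog J (reduct P I) -> I \subset J.

Definition ans_is_parity n (P : program n) : Prop :=
  forall I : {set 'I_n}, answer_set P I <-> odd #|I|.

Definition elem_vars n (e : elem n) : {set 'I_n} :=
  match e with
  | EPos x | ENeg x | ENNeg x => [set x] | _ => set0 end.
Definition rule_vars n (r : rule n) : {set 'I_n} :=
  (if r.1 is Some x then [set x] else set0) :|: \bigcup_(e <- r.2) elem_vars e.
Definition prog_vars n (P : program n) : {set 'I_n} :=
  \bigcup_(r <- P) rule_vars r.

Definition parity_program n (P : program n) : Prop :=
  prog_vars P = [set: 'I_n] /\ ans_is_parity P.

Definition consistent n (B : seq (elem n)) : Prop :=
  exists I : {set 'I_n}, sat_body I B.

Definition replace_rule n (P : program n) (r r' : rule n) : program n :=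
  r' :: filter (predC1 r) P.

(* Main.v *)
Require Import Defs.
From HB Require Import structures.
From mathcomp Require Import all_boot.

Section H.
Variable n : nat.

Lemma split_closed (P : program n) r0 I K : r0 \in P ->
 closed_prog K (reduct P I) = closed_rule K (r0.1, map (reduct_elem I) r0.2)
   && closed_prog K (reduct (filter (predC1 r0) P) I).
Proof.
move=> Hr. rewrite /closed_prog /reduct !all_map.
apply/idP/andP.
- move/allP=> H; split; first exact: (H _ Hr).
  apply/allP=> r; rewrite mem_filter => /andP[_ ]; exact: H.
- case=> H1 /allP H2; apply/allP=> r Hr'. case: (eqVneq r r0) => [->//|ne].
  apply: H2; by rewrite mem_filter /= ne.
Qed.

Lemma sat_red_self (I : {set 'I_n}) e : sat_elem I (reduct_elem I e) = sat_elem I e.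
Proof. by case: e => //= y; case: (y \in I). Qed.

Lemma sat_body_red_self (I : {set 'I_n}) B : sat_body I (map (reduct_elem I) B) = sat_body I B.
Proof. rewrite /sat_body all_map; apply: eq_all => e /=; exact: sat_red_self. Qed.

Lemma sat_red_mono (I K L : {set 'I_n}) e : K \subset L ->
  sat_elem K (reduct_elem I e) -> sat_elem L (reduct_elem I e).
Proof.
move=> KL; case: e => //= y.
- by move=> /(subsetP KL).
- by case: (y \in I).
- by case: (y \in I).
Qed.

Lemma sat_body_red_mono (I K L : {set 'I_n}) B : K \subset L ->
  sat_body K (map (reduct_elem I) B) -> sat_body L (map (reduct_elem I) B).
Proof.
move=> KL; rewrite /sat_body !all_map => /allP H; apply/allP => e He.
by apply: (@sat_red_mono I K L e KL); apply: H.
Qed.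

Lemma closed_inter (P : program n) I K L :
  closed_prog K (reduct P I) -> closed_prog L (reduct P I) ->
  closed_prog (K :&: L) (reduct P I).
Proof.
rewrite /closed_prog /reduct !all_map => /allP HK /allP HL.
apply/allP => r Hr; move: (HK r Hr) (HL r Hr) => /=; rewrite /closed_rule /=.
move=> HK1 HL1; apply/implyP => Hs.
have sK : sat_body K (map (reduct_elem I) r.2).
  by apply: sat_body_red_mono Hs; apply: subsetIl.
have sL : sat_body L (map (reduct_elem I) r.2).
  by apply: sat_body_red_mono Hs; apply: subsetIr.
move: (implyP HK1 sK) (implyP HL1 sL).
by case: r.1 => //= y; rewrite inE => -> ->.
Qed.

End H.

Theorem mainTheorem11 (n : nat) (P : program n) (x : 'I_n) (B : seq (elem n))
  (J : {set 'I_n}) :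
  parity_program P ->
  (forall r, r \in P -> forall y, r.1 = Some y -> EPos y \notin r.2) ->
  (forall r, r \in P -> consistent r.2) ->
  (Some x, B) \in P ->
  ENNeg x \in B ->
  (forall I : {set 'I_n}, sat_body I B <-> I = J) ->
  odd #|J| ->
  ans_is_parity (replace_rule P (Some x, B) (Some x, [seq e <- B | e != ENNeg x])).
Proof.
move=> [_ Hpar] _ _ Hr0 Hnn HJ Hodd I.
set B' := [seq e <- B | e != ENNeg x].
set Q := fun K => closed_prog K (reduct (filter (predC1 (Some x, B)) P) I).
have EP' : forall K, closed_prog K (reduct (replace_rule P (Some x, B) (Some x, B')) I)
   = closed_rule K (Some x, map (reduct_elem I) B') && Q K by [].
have EP : forall K, closed_prog K (reduct P I)
   = closed_rule K (Some x, map (reduct_elem I) B) && Q K.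
  by move=> K; rewrite (@split_closed n P _ I K Hr0).
apply: (iff_trans _ (Hpar I)); rewrite /answer_set.
have xJ : x \in J.
  have : sat_body J B by apply/HJ.
  by move/allP => /(_ _ Hnn).
case xI : (x \in I).
-
  have E : forall K, closed_prog K (reduct (replace_rule P (Some x, B) (Some x, B')) I)
     = closed_prog K (reduct P I).
    move=> K; rewrite EP' EP; congr (_ && _).
    rewrite /closed_rule /=; congr (_ ==> _).
    rewrite /sat_body /B' !all_map all_filter; apply: eq_all => e /=.
    by case: eqP => [->|_] //=; rewrite xI.
  split=> [[H1 H2]|[H1 H2]]; split.
    + by rewrite -E.
    + by move=> K HK; apply: H2; rewrite E.
    + by rewrite E.
    + by move=> K HK; apply: H2; rewrite -E.
have C0 : forall K, closed_rule K (Some x, map (reduct_elem I) B).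
  move=> K; rewrite /closed_rule /=; apply/implyP => /allP H.
  have : EBot \in map (reduct_elem I) B.
    by apply/mapP; exists (ENNeg x) => //=; rewrite xI.
  by move/H.
case sB' : (sat_body I B').
-
  have HxI : x |: I = J.
    apply/HJ; apply/allP => e He.
    case: (eqVneq e (ENNeg x)) => [->|ne]; first by rewrite /= setU11.
    have : sat_elem I e.
      by move/allP: sB'; apply; rewrite mem_filter ne.
    case: e ne He => //= y _ He.
    + by move=> yI; rewrite inE yI orbT.
    + move=> yI; rewrite in_setU1 negb_or yI andbT; apply/eqP => yx.
      subst y.
      have : sat_body J B by apply/HJ.
      by move/allP => /(_ _ He) /=; rewrite xJ.
    + by move=> yI; rewrite inE yI orbT.
  have cI : #|J| = #|I|.+1 by rewrite -HxI cardsU1 xI.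
  have hI : ~~ odd #|I| by move: Hodd; rewrite cI /=; case: (odd #|I|).
  split.
  + move=> [H1 _]; move: H1; rewrite EP' /closed_rule /= => /andP[/implyP H _].
    suff : x \in I by rewrite xI.
    apply: H; by rewrite sat_body_red_self sB'.
  + by move=> [H1 H2]; move: (proj1 (Hpar I) (conj H1 H2)); rewrite (negbTE hI).
- have C1 : forall K : {set 'I_n}, K \subset I -> closed_rule K (Some x, map (reduct_elem I) B').
    move=> K KI; rewrite /closed_rule /=; apply/implyP => Hs.
    have := @sat_body_red_mono n I K I _ KI Hs; rewrite sat_body_red_self sB' //.
  split.
  + move=> [H1 H2]; split.
    * by rewrite EP C0 /=; move: H1; rewrite EP' => /andP[].
    * move=> K HK.
      have QK : Q K by move: HK; rewrite EP => /andP[].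
      have QI : Q I by move: H1; rewrite EP' => /andP[].
      have : closed_prog (K :&: I) (reduct (replace_rule P (Some x, B) (Some x, B')) I).
        rewrite EP' C1 ?subsetIr //=; exact: closed_inter.
      move/H2 => sub; apply: (subset_trans sub); exact: subsetIl.
  + move=> [H1 H2]; split.
    * rewrite EP' C1 ?subxx //=; by move: H1; rewrite EP => /andP[].
    * move=> K HK; apply: H2; rewrite EP C0 /=; by move: HK; rewrite EP' => /andP[].
Qed.
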